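(* (i) The following monomials of $P_5$ are strictly inadmissible: $x_1^{3}x_2^{5}x_3^{9}x_4^{14}x_5^{14}$, $x_1^{3}x_2^{5}x_3^{14}x_4^{9}x_5^{14}$, $x_1^{3}x_2^{7}x_3^{11}x_4^{12}x_5^{12}$, $x_1^{3}x_2^{7}x_3^{13}x_4^{8}x_5^{14}$, $x_1^{3}x_2^{7}x_3^{13}x_4^{14}x_5^{8}$, $x_1^{3}x_2^{12}x_3^{3}x_4^{13}x_5^{14}$, $x_1^{7}x_2^{3}x_3^{11}x_4^{12}x_5^{12}$, $x_1^{7}x_2^{3}x_3^{13}x_4^{8}x_5^{14}$, $x_1^{7}x_2^{3}x_3^{13}x_4^{14}x_5^{8}$, $x_1^{7}x_2^{7}x_3^{9}x_4^{14}x_5^{8}$, $x_1^{7}x_2^{9}x_3^{7}x_4^{10}x_5^{12}$, $x_1^{7}x_2^{11}x_3^{3}x_4^{12}x_5^{12}$, $x_1^{7}x_2^{11}x_3^{5}x_4^{8}x_5^{14}$, $x_1^{7}x_2^{11}x_3^{5}x_4^{14}x_5^{8}$, $x_1^{7}x_2^{11}x_3^{13}x_4^{6}x_5^{8}$. (ii) The following monomials of $P_5$ are strongly inadmissible: $x_1^{3}x_2^{5}x_3^{14}x_4^{11}x_5^{12}$, $x_1^{3}x_2^{13}x_3^{6}x_4^{11}x_5^{12}$, $x_1^{3}x_2^{13}x_3^{7}x_4^{10}x_5^{12}$, $x_1^{3}x_2^{13}x_3^{14}x_4^{3}x_5^{12}$.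
   Context: $P_5=\mathbb F_2[x_1,\dots,x_5]$, $\deg x_i=1$, a module over the mod-2 Steenrod algebra $\mathcal A$. $\mathcal A(s-1)$ is the sub-Hopf algebra generated by $Sq^r$, $0\le r<2^s$, with augmentation ideal $\mathcal A(s-1)^+$. For $x=x_1^{a_1}\cdots x_5^{a_5}$: weight vector $\omega_i(x)=\sum_j\alpha_{i-1}(a_j)$ ($\alpha_r(a)$ the $r$-th binary digit), exponent vector $\sigma(x)=(a_1,\dots,a_5)$, both ordered left-lexicographically; for monomials of equal degree, $x<y$ iff $\omega(x)<\omega(y)$, or $\omega(x)=\omega(y)$ and $\sigma(x)<\sigma(y)$. $P_5^-(\omega)$ is spanned by monomials $y$ of degree $\sum_i2^{i-1}\omega_i$ with $\omega(y)<\omega$. Minimal spike of degree $n$: if $\mu(n)=s\le5$, where $\mu(n)$ is the least $r$ with $n=\sum_{i=1}^r(2^{u_i}-1)$, $u_i>0$, write uniquely $n=\sum_{i=1}^s(2^{e_i}-1)$, $e_1>\dots>e_{s-1}\ge e_s>0$; the minimal spike is $z=\prod_{i=1}^sx_i^{2^{e_i}-1}$. $\mathcal P_{(5,n)}$ is spanned by monomials $x$ of degree $n$ with $\sum_{j=1}^h2^{j-1}\omega_j(x)<\sum_{j=1}^h2^{j-1}\omega_j(z)$ for some $h\ge1$. With $s=\max\{i:\omega_i(x)>0\}$: a monomial $x$ is strictly inadmissible if there are monomials $y_1,\dots,y_r<x$ with $x+\sum_jy_j\in\mathcal A(s-1)^+P_5+P_5^-(\omega(x))$; a monomial $x$ of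 degree $n$ is strongly inadmissible if there are monomials $y_1,\dots,y_t$ with $\omega(y_u)=\omega(x)$, $y_u<x$, and $x+\sum_uy_u\in\mathcal A(s-1)^+P_5+P_5^-(\omega(x))+\mathcal P_{(5,n)}$. *)

(* Defs.v *)
From HB Require Import structures.
From mathcomp Require Import all_boot all_order all_algebra.
From mathcomp Require Import mpoly.
Set Implicit Arguments. Unset Strict Implicit. Unset Printing Implicit Defensive.
Import GRing.Theory.
Local Open Scope ring_scope.

Notation P5 := {mpoly 'F_2[5]}.
Notation mono := 'X_{1..5}.

Definition mono5 (a b c d e : nat) : mono :=
  [multinom nth 0%N [:: a; b; c; d; e] i | i < 5].

(* ---- Steenrod squares on P_5 (Cartan formula, Sq^k x^a = C(a,k) x^(a+k)) ---- *)
Definition sq_mono (r : nat) (m : mono) : P5 :=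
  \sum_(k : {ffun 'I_5 -> 'I_r.+1} | (\sum_(i < 5) (k i : nat))%N == r)
     (\prod_(i < 5) 'C(m i, k i))%N%:R *: 'X_[[multinom (m i + k i)%N | i < 5]].

Definition Sq (r : nat) (p : P5) : P5 :=
  \sum_(m <- msupp p) p@_m *: sq_mono r m.

Definition iter_Sq (rs : seq nat) (p : P5) : P5 := foldr Sq p rs.

(* A(s-1)^+ P_5 : the span of all theta(p) with theta a nonempty product of
   generators Sq^r, 0 < r < 2^s, of A(s-1) (these products span A(s-1)^+). *)
Definition in_Aplus (s : nat) (p : P5) : Prop :=
  exists l : seq (seq nat * P5),
    all (fun t => (t.1 != [::]) && all (fun r => (0 < r < 2 ^ s)%N) t.1) l /\
    p = \sum_(t <- l) iter_Sq t.1 t.2.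

Definition alpha (k a : nat) : nat := odd (a %/ 2 ^ k).

(* omega m i = omega_i(m) for i >= 1 (omega m 0 is unused, set to 0) *)
Definition omega (m : mono) (i : nat) : nat :=
  if i is i'.+1 then (\sum_(j < 5) alpha i' (m j))%N else 0%N.

Definition wlt (w1 w2 : nat -> nat) : Prop :=
  exists i, (0 < i)%N /\ (forall j, (0 < j < i)%N -> w1 j = w2 j) /\ (w1 i < w2 i)%N.

Definition slt (m1 m2 : mono) : Prop :=
  exists i : 'I_5, (forall j : 'I_5, (j < i)%N -> m1 j = m2 j) /\ (m1 i < m2 i)%N.

Definition mlt (x y : mono) : Prop :=
  mdeg x = mdeg y /\
  (wlt (omega x) (omega y) \/ ((forall i, omega x i = omega y i) /\ slt x y)).

Definition top_weight (x : mono) (s : nat) : Prop :=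
  (0 < omega x s)%N /\ forall i, (s < i)%N -> omega x i = 0%N.

Definition in_Pminus (x : mono) (p : P5) : Prop :=
  forall y, y \in msupp p -> mdeg y = mdeg x /\ wlt (omega y) (omega x).

Definition spike_sum (n r : nat) : Prop :=
  exists u : seq nat, size u = r /\ all (fun e => (0 < e)%N) u /\
    n = (\sum_(e <- u) (2 ^ e - 1))%N.

Definition mu_is (n s : nat) : Prop :=
  spike_sum n s /\ forall r, (r < s)%N -> ~ spike_sum n r.

(* z is the minimal spike of degree n (requires mu(n) = s <= 5);
   e i stands for e_{i+1} *)
Definition min_spike (n : nat) (z : mono) : Prop :=
  exists s, mu_is n s /\ (s <= 5)%N /\
  exists e : nat -> nat,
    (forall i, (i.+2 < s)%N -> (e i.+1 < e i)%N) /\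
    ((1 < s)%N -> (e s.-1 <= e s.-2)%N) /\
    ((0 < s)%N -> (0 < e s.-1)%N) /\
    n = (\sum_(i < s) (2 ^ e i - 1))%N /\
    (forall i : 'I_5, z i = if (i < s)%N then (2 ^ e i - 1)%N else 0%N).

Definition in_Pn (n : nat) (p : P5) : Prop :=
  forall x, x \in msupp p -> mdeg x = n /\
    exists z, min_spike n z /\
      exists h, (1 <= h)%N /\
        (\sum_(j < h) 2 ^ j * omega x j.+1 < \sum_(j < h) 2 ^ j * omega z j.+1)%N.

Definition strictly_inadmissible (x : mono) : Prop :=
  exists s, top_weight x s /\
  exists ys : seq mono, (forall y, y \in ys -> mlt y x) /\
  exists a b : P5, in_Aplus s a /\ in_Pminus x b /\
    'X_[x] + \sum_(y <- ys) 'X_[y] = a + b.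

Definition strongly_inadmissible (x : mono) : Prop :=
  exists s, top_weight x s /\
  exists ys : seq mono,
    (forall y, y \in ys -> (forall i, omega y i = omega x i) /\ mlt y x) /\
  exists a b c : P5, in_Aplus s a /\ in_Pminus x b /\ in_Pn (mdeg x) c /\
    'X_[x] + \sum_(y <- ys) 'X_[y] = a + b + c.

(* Main.v *)
Require Import Defs.
From mathcomp Require Import all_boot all_order all_algebra.
From mathcomp Require Import mpoly zify.
Set Implicit Arguments. Unset Strict Implicit. Unset Printing Implicit Defensive.
Import GRing.Theory.
Local Open Scope ring_scope.

Definition toM (t : seq nat) : mono := [multinom nth 0%N t i | i < 5].
Definition interp (L : seq (seq nat)) : P5 := \sum_(t <- L) 'X_[toM t].

Definition nf (T : eqType) (L : seq T) := [seq t <- undup L | odd (count_mem t L)].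

Lemma F2_two : (2%:R : 'F_2) = 0.
Proof. by apply/eqP. Qed.

Lemma F2_natr (n : nat) : (n%:R : 'F_2) = (odd n)%:R.
Proof.
rewrite {1}(divn_eq n 2) natrD natrM F2_two mulr0 add0r modn2 //.
Qed.

Lemma P5_double (p : P5) : p + p = 0.
Proof.
by rewrite -mulr2n -scaler_nat F2_two scale0r.
Qed.

Lemma P5_opp (p : P5) : - p = p.
Proof. by apply/eqP; rewrite eq_sym -subr_eq0 opprK P5_double. Qed.

Lemma P5_muln (p : P5) n : p *+ n = p *+ odd n.
Proof. by rewrite -!scaler_nat F2_natr; case: (odd n). Qed.

Lemma sum_nf (T : eqType) (f : T -> P5) (L : seq T) :
  \sum_(t <- L) f t = \sum_(t <- nf L) f t.
Proof.
rewrite -big_undup_iterop_count big_filter [RHS]big_mkcond /=.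
apply: eq_bigr => t _.
rewrite Monoid.iteropE iter_addr_0 P5_muln; by case: (odd _).
Qed.
Local Close Scope ring_scope.

Fixpoint comps (r n : nat) : seq (seq nat) :=
  if n is n'.+1 then [seq i :: c | i <- iota 0 r.+1, c <- comps (r - i) n']
  else if r == 0 then [:: [::]] else [::].

Lemma mem_comps n r c : (c \in comps r n) = (size c == n) && (sumn c == r).
Proof.
elim: n r c => [|n IH] r c.
  case: c => [|a c] /=; case: r => //=.
apply/allpairsPdep/idP.
  case=> [i [c' [Hi Hc' ->]]] /=.
  rewrite IH in Hc'; case/andP: Hc' => /eqP -> /eqP ->.
  rewrite mem_iota in Hi; rewrite eqxx /=; apply/eqP; lia.
case: c => [|a c] // /andP [Hs Hsum].
rewrite /= eqSS in Hs; rewrite /= in Hsum.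
exists a, c; split.
- rewrite mem_iota; move/eqP: Hsum => Hsum; apply/andP; split; lia.
- rewrite IH Hs /=; move/eqP: Hsum => <-; apply/eqP; lia.
- by [].
Qed.

Lemma comps_S r n : comps r n.+1 = [seq i :: c | i <- iota 0 r.+1, c <- comps (r - i) n].
Proof. by []. Qed.

Lemma comps_uniq n r : uniq (comps r n).
Proof.
elim: n r => [|n IH] r; first by rewrite /=; case: (r == 0).
rewrite comps_S.
apply: allpairs_uniq_dep; first exact: iota_uniq.
  by move=> i _; apply: IH.
move=> [i1 c1] [i2 c2] _ _ /= [e1 e2].
by subst.
Qed.
Fixpoint prow (a : nat) : seq bool :=
  if a is a'.+1 then
    let p := prow a' in
    [seq (if k is k'.+1 then nth false p k' else false) (+) nth false p k | k <- iota 0 a.+1]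
  else [:: true].

Lemma size_prow a : size (prow a) = a.+1.
Proof. by case: a => //= a; rewrite size_map size_iota. Qed.

Lemma prow_S a : prow a.+1 =
  [seq (if k is k'.+1 then nth false (prow a) k' else false) (+) nth false (prow a) k | k <- iota 0 a.+2].
Proof. by []. Qed.

Lemma prowE a k : nth false (prow a) k = odd 'C(a, k).
Proof.
elim: a k => [|a IH] k.
  by case: k => [|[|k]].
have [lt|ge] := ltnP k a.+2.
  rewrite prow_S (nth_map 0) ?size_iota // nth_iota // add0n.
  case: k lt => [|k] lt; first by rewrite IH bin0 /=.
  by rewrite !IH binS oddD addbC.
rewrite nth_default; last by rewrite size_prow.
by rewrite bin_small.
Qed.

Definition addL (e c : seq nat) := [seq (nth 0 e j + nth 0 c j)%N | j <- iota 0 5].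
Definition oddc (e c : seq nat) := all (fun j => nth false (prow (nth 0 e j)) (nth 0 c j)) (iota 0 5).
Definition sqE r e :=
  let rows := [seq prow (nth 0 e j) | j <- iota 0 5] in
  [seq addL e c | c <- comps r 5 & all (fun j => nth false (nth [::] rows j) (nth 0 c j)) (iota 0 5)].

Lemma sqE_eq r e : sqE r e = [seq addL e c | c <- comps r 5 & oddc e c].
Proof.
rewrite /sqE /oddc; congr map; apply: eq_filter => c; apply: eq_in_all => j.
Qed.

Definition gof (r : nat) (c : seq nat) : {ffun 'I_5 -> 'I_r.+1} := [ffun i : 'I_5 => inord (nth 0 c i)].

Lemma comps5 r c : c \in comps r 5 ->
  exists c0 c1 c2 c3 c4, c = [:: c0; c1; c2; c3; c4] /\ (c0 + c1 + c2 + c3 + c4 = r)%N.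
Proof.
rewrite mem_comps => /andP [/eqP Hs /eqP Hr].
case: c Hs Hr => [|c0 [|c1 [|c2 [|c3 [|c4 [|? ?]]]]]] //= _ Hr.
exists c0, c1, c2, c3, c4; split => //; lia.
Qed.

Lemma gof_val r c (i : 'I_5) : c \in comps r 5 -> (gof r c i : nat) = nth 0 c i.
Proof.
move=> /comps5 [c0 [c1 [c2 [c3 [c4 [-> Hr]]]]]].
rewrite ffunE inordK //.
case: i => [[|[|[|[|[|i]]]]] Hi] //=; lia.
Qed.

Lemma perm_comps r :
  perm_eq (filter (fun k : {ffun 'I_5 -> 'I_r.+1} => (\sum_(i < 5) (k i : nat))%N == r) (index_enum {ffun 'I_5 -> 'I_r.+1}))
          (map (gof r) (comps r 5)).
Proof.
apply: uniq_perm.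
- by rewrite filter_uniq // index_enum_uniq.
- rewrite map_inj_in_uniq ?comps_uniq // => c1 c2 H1 H2 E.
  move: (H1) (H2); rewrite !mem_comps => /andP [/eqP s1 _] /andP [/eqP s2 _].
  apply: (@eq_from_nth _ 0); first by rewrite s1 s2.
  move=> j; rewrite s1 => Hj.
  have := congr1 (fun f : {ffun 'I_5 -> 'I_r.+1} => (f (Ordinal Hj) : nat)) E.
  by rewrite /= !gof_val.
move=> k; rewrite mem_filter mem_index_enum andbT.
apply/idP/mapP.
- move=> /eqP Hk.
  exists [seq (k i : nat) | i <- enum 'I_5].
    rewrite mem_comps size_map size_enum_ord eqxx /=.
    by rewrite sumnE big_map big_enum /= Hk.
  apply/ffunP => i; apply: val_inj.
  by rewrite ffunE (nth_map i) ?size_enum_ord // nth_ord_enum inord_val.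
- case=> c Hc ->.
  have := Hc; move=> /comps5 [c0 [c1 [c2 [c3 [c4 [Ec Hr]]]]]].
  rewrite (eq_bigr (fun i : 'I_5 => nth 0 c i)); last by move=> i _; rewrite gof_val.
  by rewrite Ec !big_ord_recr big_ord0 /= Hr.
Qed.

Lemma sq_monoE r e : sq_mono r (toM e) = interp (sqE r e).
Proof.
rewrite /sq_mono -big_filter (perm_big _ (perm_comps r)) big_map.
rewrite sqE_eq /interp big_map big_filter [RHS]big_mkcond.
rewrite big_seq [RHS]big_seq; apply: eq_bigr => c Hc.
have Hg := fun i => gof_val i Hc.
have := Hc; move=> /comps5 [c0 [c1 [c2 [c3 [c4 [Ec Hr]]]]]].
have -> : [multinom (toM e i + gof r c i)%N | i < 5] = toM (addL e c).
  apply/mnmP => i; rewrite !mnmE Hg /addL (nth_map 0) ?size_iota // nth_iota //.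
rewrite (eq_bigr (fun i : 'I_5 => 'C(nth 0 e i, nth 0 c i))); last first.
  by move=> i _; rewrite Hg mnmE.
rewrite F2_natr.
have -> : odd (\prod_(i < 5) 'C(nth 0 e i, nth 0 c i)) = oddc e c.
  rewrite /oddc !big_ord_recr big_ord0 /= !oddM !prowE Ec /=.
  by rewrite andbT -!andbA.
by case: (oddc e c); rewrite ?scale1r ?scale0r.
Qed.

Definition degL (t : seq nat) := sumn [seq nth 0 t j | j <- iota 0 5].
Definition omL (t : seq nat) i := sumn [seq alpha i (nth 0 t j) | j <- iota 0 5].

Lemma sum5 (F : nat -> nat) : \sum_(j < 5) F j = sumn [seq F j | j <- iota 0 5].
Proof. by rewrite !big_ord_recr big_ord0 /= !addnA addn0. Qed.

Lemma omega_toM t i : omega (toM t) i.+1 = omL t i.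
Proof.
rewrite /omega /omL -sum5; apply: eq_bigr => j _; by rewrite mnmE.
Qed.

Lemma mdeg_toM t : mdeg (toM t) = degL t.
Proof.
rewrite mdegE /degL -sum5; apply: eq_bigr => j _; by rewrite mnmE.
Qed.

Lemma alpha_small i a : a < 2 ^ i -> alpha i a = 0.
Proof. by move=> H; rewrite /alpha divn_small. Qed.

Definition wltb t x :=
  has (fun i => (omL t i < omL x i) && all (fun j => omL t j == omL x j) (iota 0 i)) (iota 0 6).

Lemma wltbP t x : wltb t x -> wlt (omega (toM t)) (omega (toM x)).
Proof.
case/hasP => i _ /andP [Hlt /allP Hall].
exists i.+1; split => //; split; last by rewrite !omega_toM.
case=> [|j] // /andP [_ Hj]; rewrite !omega_toM; apply/eqP/Hall.
by rewrite mem_iota.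
Qed.

Definition small (t : seq nat) := all (fun j => nth 0 t j < 64) (iota 0 5).

Lemma omL_small t i : small t -> 6 <= i -> omL t i = 0.
Proof.
move=> /allP Hs Hi; rewrite /omL.
have H : forall j, j \in iota 0 5 -> alpha i (nth 0 t j) = 0.
  move=> j Hj; apply: alpha_small; apply: (leq_trans (Hs j Hj)).
  by rewrite (_ : 64 = 2 ^ 6) // leq_exp2l.
by rewrite /= !H.
Qed.

Definition sameb t x := [&& all (fun j => omL t j == omL x j) (iota 0 6), small t & small x].

Lemma samebP t x : sameb t x -> forall i, omega (toM t) i = omega (toM x) i.
Proof.
case/and3P => /allP Ha St Sx [|i] //; rewrite !omega_toM.
have [lt|ge] := ltnP i 6.
  by apply/eqP/Ha; rewrite mem_iota.
by rewrite !omL_small.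
Qed.

Definition sltb (t x : seq nat) :=
  has (fun i => (nth 0 t i < nth 0 x i) && all (fun j => nth 0 t j == nth 0 x j) (iota 0 i)) (iota 0 5).

Lemma sltbP t x : sltb t x -> slt (toM t) (toM x).
Proof.
case/hasP => i; rewrite mem_iota => /andP [_ Hi] /andP [Hlt /allP Hall].
exists (Ordinal Hi); split; last by rewrite !mnmE.
move=> j Hj; rewrite !mnmE; apply/eqP/Hall; by rewrite mem_iota.
Qed.

Definition topb x := (0 < omL x 3) && all (fun j => nth 0 x j < 16) (iota 0 5).

Lemma topbP x : topb x -> top_weight (toM x) 4.
Proof.
case/andP => H3 /allP Hs; split; first by rewrite omega_toM.
case=> [|i] // Hi; rewrite omega_toM /omL.
have H : forall j, j \in iota 0 5 -> alpha i (nth 0 x j) = 0.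
  move=> j Hj; apply: alpha_small; apply: (leq_trans (Hs j Hj)).
  by rewrite (_ : 16 = 2 ^ 4) // leq_exp2l.
by rewrite /= !H.
Qed.

Definition check (xl : seq nat) (cert : seq (nat * seq nat)) :=
  let L := flatten [seq sqE c.1 c.2 | c <- cert] in
  let N := nf (xl :: L) in
  [&& topb xl, all (fun c => 0 < c.1 < 16) cert &
      all (fun t => if wltb t xl then degL t == degL xl
                    else [&& degL t == degL xl, sameb t xl & sltb t xl]) N].

Local Open Scope ring_scope.

Lemma Sq_X r m : Sq r 'X_[m] = sq_mono r m.
Proof. by rewrite /Sq msuppX big_seq1 mcoeffX eqxx scale1r. Qed.

Lemma interp_cat L1 L2 : interp (L1 ++ L2) = interp L1 + interp L2.
Proof. by rewrite /interp big_cat. Qed.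

Lemma interp_flatten (cert : seq (nat * seq nat)) :
  interp (flatten [seq sqE c.1 c.2 | c <- cert]) =
  \sum_(c <- cert) iter_Sq [:: c.1] 'X_[toM c.2].
Proof.
elim: cert => [|c cert IH]; first by rewrite /interp !big_nil.
by rewrite /= interp_cat IH big_cons /= Sq_X sq_monoE.
Qed.

Lemma sum_split (p : pred (seq nat)) (N : seq (seq nat)) (F : seq nat -> P5) :
  \sum_(t <- N) F t = \sum_(t <- [seq t <- N | ~~ p t]) F t + \sum_(t <- [seq t <- N | p t]) F t.
Proof. by rewrite !big_filter (bigID p) addrC. Qed.

Lemma check_sound xl cert : check xl cert ->
  exists ys : seq (seq nat),
    (forall t, t \in ys -> [/\ mdeg (toM t) = mdeg (toM xl), sameb t xl & sltb t xl]) /\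
  exists a b : P5, in_Aplus 4 a /\ in_Pminus (toM xl) b /\
    'X_[toM xl] + \sum_(y <- ys) 'X_[toM y] = a + b.
Proof.
case/and3P => _ Hcert /allP HN.
set L := flatten _ in HN; set N := nf _ in HN.
exists [seq t <- N | ~~ wltb t xl]; split.
  move=> t; rewrite mem_filter => /andP [Hw HtN].
  move: (HN t HtN); rewrite (negbTE Hw) => /and3P [/eqP Hd Hs Hl].
  by split => //; rewrite !mdeg_toM.
exists (interp L), (interp [seq t <- N | wltb t xl]); split; [|split].
- exists [seq ([:: c.1], 'X_[toM c.2]) | c <- cert]; split.
    rewrite all_map; apply/allP => c Hc /=; rewrite andbT.
    by have := allP Hcert c Hc.
  by rewrite big_map -interp_flatten.
- move=> y /msupp_sum_le /flattenP [s /mapP [t Ht ->]].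
  rewrite msuppX inE => /eqP ->.
  move: Ht; rewrite mem_filter => /andP [_]; rewrite mem_filter => /andP [Hw HtN].
  move: (HN t HtN); rewrite Hw => /eqP Hd.
  by split; [rewrite !mdeg_toM | apply: wltbP].
have HNs : interp N = 'X_[toM xl] + interp L.
  by rewrite /interp -sum_nf big_cons.
have Hsplit : interp N = \sum_(y <- [seq t <- N | ~~ wltb t xl]) 'X_[toM y]
                          + interp [seq t <- N | wltb t xl].
  by rewrite /interp (sum_split (fun t => wltb t xl)).
rewrite HNs in Hsplit.
have -> : \sum_(y <- [seq t <- N | ~~ wltb t xl]) 'X_[toM y] =
          'X_[toM xl] + interp L - interp [seq t <- N | wltb t xl].
  by rewrite Hsplit addrK.
by rewrite P5_opp !addrA P5_double add0r.
Qed.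


Lemma strict_of_check xl cert : check xl cert -> strictly_inadmissible (toM xl).
Proof.
move=> H; have Ht : topb xl by case/and3P: H.
case/check_sound: H => ys [Hys [a [b [Ha [Hb E]]]]].
exists 4; split; first exact: topbP.
exists (map toM ys); split.
  move=> y /mapP [t Ht' ->]; case: (Hys t Ht') => Hd Hs Hl.
  by split => //; right; split; [apply: samebP | apply: sltbP].
by exists a, b; split => //; split => //; rewrite big_map.
Qed.

Lemma strong_of_check xl cert : check xl cert -> strongly_inadmissible (toM xl).
Proof.
move=> H; have Ht : topb xl by case/and3P: H.
case/check_sound: H => ys [Hys [a [b [Ha [Hb E]]]]].
exists 4; split; first exact: topbP.
exists (map toM ys); split.
  move=> y /mapP [t Ht' ->]; case: (Hys t Ht') => Hd Hs Hl.
  split; first exact: samebP.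
  by split => //; right; split; [apply: samebP | apply: sltbP].
exists a, b, 0; split => //; split => //; split.
  by move=> y; rewrite msupp0.
by rewrite addr0 big_map.
Qed.

Local Close Scope ring_scope.

Definition cert0 : seq (nat * seq nat) := [:: (1, [:: 3; 3; 7; 13; 18]); (1, [:: 3; 3; 7; 17; 14]); (1, [:: 3; 3; 11; 13; 14]); (2, [:: 2; 3; 11; 13; 14]); (2, [:: 3; 3; 9; 14; 14]); (2, [:: 3; 5; 7; 14; 14]); (4, [:: 3; 3; 7; 14; 14])].
Definition cert1 : seq (nat * seq nat) := [:: (1, [:: 3; 3; 13; 7; 18]); (1, [:: 3; 3; 13; 11; 14]); (1, [:: 3; 3; 17; 7; 14]); (2, [:: 2; 3; 13; 11; 14]); (2, [:: 3; 3; 14; 9; 14]); (2, [:: 3; 5; 14; 7; 14]); (4, [:: 3; 3; 14; 7; 14])].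
Definition cert2 : seq (nat * seq nat) := [:: (1, [:: 3; 7; 3; 13; 18]); (1, [:: 3; 7; 3; 17; 14]); (1, [:: 3; 7; 9; 7; 18]); (1, [:: 3; 7; 9; 11; 14]); (1, [:: 3; 7; 11; 12; 11]); (1, [:: 3; 7; 12; 9; 13]); (1, [:: 3; 11; 3; 13; 14]); (1, [:: 3; 11; 9; 7; 14]); (1, [:: 5; 7; 9; 10; 13]); (1, [:: 5; 7; 9; 12; 11]); (1, [:: 5; 9; 3; 13; 14]); (1, [:: 5; 9; 5; 11; 14]); (2, [:: 2; 7; 9; 11; 14]); (2, [:: 2; 7; 11; 12; 11]); (2, [:: 2; 11; 3; 13; 14]); (2, [:: 2; 11; 9; 7; 14]); (2, [:: 3; 7; 5; 14; 14]); (2, [:: 3; 7; 9; 10; 14]); (2, [:: 3; 7; 10; 9; 14]); (2, [:: 3; 7; 10; 10; 13]); (2, [:: 3; 7; 10; 12; 11]); (2, [:: 3; 7; 12; 7; 14]); (2, [:: 3; 9; 6; 11; 14]); (2, [:: 3; 9; 10; 7; 14]); (2, [:: 3; 10; 3; 13; 14]); (2, [:: 3; 10; 5; 11; 14]); (2, [:: 6; 7; 9; 10; 11]); (2, [:: 6; 9; 3; 11; 14]); (4, [:: 3; 5; 6; 13; 14]); (4, [:: 3; 5; 12; 7; 14]); (4, [:: 3; 7; 3; 14; 14]); (4, [:: 3; 7; 4; 13; 14]); (4, [:: 3; 7; 10; 7; 14]); (4, [:: 3; 12; 5; 7; 14])].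
Definition cert3 : seq (nat * seq nat) := [:: (1, [:: 3; 7; 7; 9; 18]); (1, [:: 3; 7; 11; 5; 18]); (1, [:: 3; 11; 7; 9; 14]); (1, [:: 3; 11; 11; 5; 14]); (2, [:: 2; 11; 7; 9; 14]); (2, [:: 2; 11; 11; 5; 14]); (2, [:: 3; 7; 7; 12; 14]); (2, [:: 3; 7; 9; 10; 14]); (2, [:: 3; 7; 11; 8; 14]); (2, [:: 3; 7; 13; 6; 14]); (2, [:: 3; 9; 7; 10; 14]); (2, [:: 3; 9; 11; 6; 14]); (4, [:: 3; 5; 7; 12; 14]); (4, [:: 3; 5; 13; 6; 14]); (4, [:: 3; 7; 7; 10; 14]); (4, [:: 3; 7; 11; 6; 14]); (4, [:: 3; 7; 12; 5; 14]); (4, [:: 3; 12; 7; 5; 14])].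
Definition cert4 : seq (nat * seq nat) := [:: (1, [:: 3; 7; 7; 9; 18]); (1, [:: 3; 7; 11; 9; 14]); (1, [:: 3; 7; 11; 13; 10]); (1, [:: 3; 7; 11; 17; 6]); (1, [:: 3; 11; 7; 9; 14]); (1, [:: 3; 11; 7; 11; 12]); (1, [:: 3; 11; 7; 12; 11]); (1, [:: 3; 11; 11; 13; 6]); (1, [:: 3; 12; 7; 9; 13]); (1, [:: 5; 9; 7; 10; 13]); (1, [:: 5; 9; 7; 11; 12]); (1, [:: 5; 9; 7; 12; 11]); (1, [:: 5; 9; 7; 13; 10]); (2, [:: 2; 7; 11; 9; 14]); (2, [:: 2; 7; 11; 13; 10]); (2, [:: 2; 11; 7; 9; 14]); (2, [:: 2; 11; 7; 11; 12]); (2, [:: 2; 11; 7; 12; 11]); (2, [:: 2; 11; 11; 13; 6]); (2, [:: 3; 7; 7; 12; 14]); (2, [:: 3; 7; 9; 10; 14]); (2, [:: 3; 7; 11; 14; 8]); (2, [:: 3; 7; 13; 14; 6]); (2, [:: 3; 9; 7; 14; 10]); (2, [:: 3; 9; 11; 14; 6]); (2, [:: 3; 10; 7; 10; 13]); (2, [:: 3; 10; 7; 11; 12]); (2, [:: 3; 10; 7; 12; 11]); (2, [:: 3; 10; 7; 13; 10]); (2, [:: 6; 9; 7; 10; 11]); (2, [:: 6; 9; 7; 11; 10]); (4, [:: 3; 5; 7; 14; 12]); (4, [:: 3; 5; 13; 14; 6]); (4, [:: 3; 7; 7; 10; 14]); (4, [:: 3; 7; 11; 14; 6]); (4, [:: 3;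 7; 12; 13; 6]); (4, [:: 3; 12; 7; 13; 6])].
Definition cert5 : seq (nat * seq nat) := [:: (1, [:: 3; 7; 3; 13; 18]); (1, [:: 3; 7; 3; 17; 14]); (1, [:: 3; 11; 3; 13; 14]); (2, [:: 2; 11; 3; 13; 14]); (2, [:: 3; 7; 5; 14; 14]); (2, [:: 3; 9; 3; 14; 14]); (4, [:: 3; 7; 3; 14; 14])].
Definition cert6 : seq (nat * seq nat) := [:: (1, [:: 7; 3; 3; 13; 18]); (1, [:: 7; 3; 3; 17; 14]); (1, [:: 7; 3; 7; 9; 18]); (1, [:: 7; 3; 11; 9; 14]); (1, [:: 7; 3; 11; 12; 11]); (1, [:: 7; 3; 12; 9; 13]); (1, [:: 7; 5; 9; 10; 13]); (1, [:: 7; 5; 9; 12; 11]); (1, [:: 9; 3; 5; 13; 14]); (1, [:: 9; 5; 3; 13; 14]); (1, [:: 9; 5; 7; 9; 14]); (1, [:: 11; 1; 5; 13; 14]); (1, [:: 11; 3; 3; 13; 14]); (1, [:: 11; 3; 7; 9; 14]); (1, [:: 13; 1; 3; 13; 14]); (1, [:: 13; 1; 5; 11; 14]); (1, [:: 13; 1; 7; 9; 14]); (1, [:: 13; 1; 9; 7; 14]); (2, [:: 7; 2; 11; 9; 14]); (2, [:: 7; 2; 11; 12; 11]); (2, [:: 7; 3; 5; 14; 14]); (2, [:: 7; 3; 7; 12; 14]); (2, [:: 7; 3; 10; 10; 13]); (2, [:: 7; 3; 10; 12; 11]); (2, [:: 7; 6; 9; 10; 11]); (2, [:: 10; 3; 3;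 13; 14]); (2, [:: 10; 3; 7; 9; 14]); (2, [:: 11; 1; 3; 14; 14]); (2, [:: 11; 1; 6; 11; 14]); (2, [:: 11; 1; 7; 10; 14]); (2, [:: 11; 1; 10; 7; 14]); (2, [:: 11; 2; 3; 13; 14]); (2, [:: 11; 2; 7; 9; 14]); (2, [:: 14; 1; 3; 11; 14]); (2, [:: 14; 1; 7; 7; 14]); (4, [:: 5; 3; 5; 14; 14]); (4, [:: 5; 3; 6; 13; 14]); (4, [:: 5; 6; 3; 13; 14]); (4, [:: 5; 6; 7; 9; 14]); (4, [:: 7; 1; 7; 12; 14]); (4, [:: 7; 1; 12; 7; 14]); (4, [:: 7; 3; 3; 14; 14]); (4, [:: 7; 3; 4; 13; 14]); (4, [:: 7; 3; 7; 10; 14]); (4, [:: 13; 2; 5; 7; 14])].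
Definition cert7 : seq (nat * seq nat) := [:: (1, [:: 7; 3; 7; 9; 18]); (1, [:: 7; 3; 11; 5; 18]); (1, [:: 9; 3; 13; 5; 14]); (1, [:: 9; 5; 7; 9; 14]); (1, [:: 9; 5; 11; 5; 14]); (1, [:: 11; 1; 13; 5; 14]); (1, [:: 11; 3; 7; 9; 14]); (1, [:: 11; 3; 11; 5; 14]); (2, [:: 7; 3; 7; 12; 14]); (2, [:: 7; 3; 9; 10; 14]); (2, [:: 7; 3; 11; 8; 14]); (2, [:: 7; 3; 13; 6; 14]); (2, [:: 10; 3; 7; 9; 14]); (2, [:: 10; 3; 11; 5; 14]); (2, [:: 11; 2; 7; 9; 14]); (2, [:: 11; 2; 11; 5; 14]); (4, [:: 5; 3; 13; 6; 14]); (4, [:: 5; 3; 14; 5; 14]); (4, [:: 5; 6; 7; 9; 14]); (4, [:: 5; 6; 11; 5; 14]); (4, [:: 7; 1; 13; 6; 14]); (4, [:: 7; 1; 14; 5; 14]); (4, [:: 7; 3; 7; 10; 14]); (4, [:: 7; 3; 11; 6; 14]); (4, [:: 7; 3; 12; 5; 14]); (4, [:: 13; 2; 7; 5; 14])].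
Definition cert8 : seq (nat * seq nat) := [:: (1, [:: 7; 3; 7; 9; 18]); (1, [:: 7; 3; 11; 9; 14]); (1, [:: 7; 3; 11; 13; 10]); (1, [:: 7; 3; 11; 17; 6]); (1, [:: 7; 5; 7; 12; 13]); (1, [:: 7; 5; 7; 13; 12]); (1, [:: 7; 5; 9; 11; 12]); (1, [:: 7; 5; 9; 12; 11]); (1, [:: 7; 8; 7; 11; 11]); (1, [:: 9; 3; 7; 12; 13]); (1, [:: 9; 3; 7; 13; 12]); (1, [:: 9; 3; 13; 13; 6]); (1, [:: 9; 5; 7; 9; 14]); (1, [:: 9; 5; 7; 11; 12]); (1, [:: 9; 5; 7; 12; 11]); (1, [:: 9; 5; 11; 13; 6]); (1, [:: 11; 1; 7; 13; 12]); (1, [:: 11; 1; 13; 13; 6]); (1, [:: 11; 3; 7; 9; 14]); (1, [:: 11; 3; 7; 11; 12]); (1, [:: 11; 3; 7; 12; 11]); (1, [:: 11; 3; 11; 13; 6]); (1, [:: 11; 4; 7; 9; 13]); (1, [:: 13; 1; 7; 10; 13]); (1, [:: 13; 1; 7; 11; 12]); (1, [:: 13; 1; 7; 12; 11]); (1, [:: 13; 1; 7; 13; 10]); (2, [:: 7; 2; 11; 9; 14]); (2, [:: 7; 2; 11; 13; 10]); (2, [:: 7; 3; 7; 14; 12]); (2, [:: 7; 3; 9; 10; 14]); (2, [:: 7; 3; 10; 11; 12]); (2, [:: 7; 3; 10; 12; 11]); (2, [:: 7; 3; 11; 14; 8]); (2, [:: 7; 3; 13; 14; 6]); (2, [:: 7;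 6; 7; 11; 12]); (2, [:: 7; 6; 7; 12; 11]); (2, [:: 10; 3; 7; 9; 14]); (2, [:: 10; 3; 7; 11; 12]); (2, [:: 10; 3; 7; 12; 11]); (2, [:: 10; 3; 11; 13; 6]); (2, [:: 11; 1; 7; 10; 14]); (2, [:: 11; 1; 7; 14; 10]); (2, [:: 11; 2; 7; 10; 13]); (2, [:: 11; 2; 7; 11; 12]); (2, [:: 11; 2; 7; 12; 11]); (2, [:: 11; 2; 11; 13; 6]); (2, [:: 14; 1; 7; 10; 11]); (2, [:: 14; 1; 7; 11; 10]); (4, [:: 5; 3; 13; 14; 6]); (4, [:: 5; 3; 14; 13; 6]); (4, [:: 5; 6; 7; 9; 14]); (4, [:: 5; 6; 11; 13; 6]); (4, [:: 7; 1; 7; 12; 14]); (4, [:: 7; 1; 13; 14; 6]); (4, [:: 7; 1; 14; 13; 6]); (4, [:: 7; 3; 7; 10; 14]); (4, [:: 7; 3; 11; 14; 6]); (4, [:: 7; 3; 12; 13; 6]); (4, [:: 13; 2; 7; 13; 6])].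
Definition cert9 : seq (nat * seq nat) := [:: (1, [:: 5; 7; 13; 7; 12]); (1, [:: 7; 3; 7; 9; 18]); (1, [:: 7; 3; 11; 9; 14]); (1, [:: 7; 5; 12; 7; 13]); (1, [:: 7; 7; 9; 8; 13]); (1, [:: 7; 7; 9; 9; 12]); (1, [:: 7; 7; 11; 7; 12]); (1, [:: 7; 7; 11; 8; 11]); (1, [:: 7; 8; 11; 7; 11]); (1, [:: 7; 9; 1; 13; 14]); (1, [:: 7; 9; 2; 13; 13]); (1, [:: 7; 9; 3; 13; 12]); (1, [:: 7; 9; 4; 13; 11]); (1, [:: 7; 9; 5; 9; 14]); (1, [:: 7; 9; 5; 10; 13]); (1, [:: 7; 9; 5; 11; 12]); (1, [:: 7; 9; 5; 12; 11]); (1, [:: 7; 11; 1; 11; 14]); (1, [:: 7; 11; 1; 12; 13]); (1, [:: 7; 11; 2; 11; 13]); (1, [:: 7; 11; 3; 9; 14]); (1, [:: 7; 11; 3; 10; 13]); (1, [:: 7; 11; 3; 11; 12]); (1, [:: 7; 11; 3; 12; 11]); (1, [:: 7; 11; 4; 9; 13]); (1, [:: 7; 11; 4; 11; 11]); (1, [:: 9; 3; 12; 7; 13]); (1, [:: 9; 5; 7; 9; 14]); (1, [:: 9; 5; 12; 7; 11]); (1, [:: 11; 3; 7; 9; 14]); (1, [:: 11; 3; 12; 7; 11]); (1, [:: 11; 4; 9; 7; 13]); (1, [:: 11; 5; 3; 13; 12]); (1, [:: 11; 5; 5; 13; 10]); (1, [:: 13; 1; 7; 9; 14]); (1, [:: 13;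 1; 9; 7; 14]); (1, [:: 13; 1; 10; 7; 13]); (1, [:: 13; 1; 12; 7; 11]); (1, [:: 13; 3; 3; 13; 12]); (1, [:: 13; 3; 5; 13; 10]); (1, [:: 13; 5; 3; 13; 10]); (2, [:: 3; 7; 14; 7; 12]); (2, [:: 6; 7; 11; 7; 12]); (2, [:: 7; 3; 7; 12; 14]); (2, [:: 7; 3; 12; 7; 14]); (2, [:: 7; 6; 12; 7; 11]); (2, [:: 7; 7; 1; 14; 14]); (2, [:: 7; 7; 6; 9; 14]); (2, [:: 7; 7; 9; 14; 6]); (2, [:: 7; 7; 10; 7; 12]); (2, [:: 7; 7; 10; 8; 11]); (2, [:: 7; 9; 2; 14; 11]); (2, [:: 7; 9; 6; 10; 11]); (2, [:: 7; 10; 1; 11; 14]); (2, [:: 7; 10; 2; 11; 13]); (2, [:: 7; 10; 3; 9; 14]); (2, [:: 7; 10; 3; 10; 13]); (2, [:: 7; 10; 3; 11; 12]); (2, [:: 7; 10; 3; 12; 11]); (2, [:: 7; 10; 4; 11; 11]); (2, [:: 10; 3; 7; 9; 14]); (2, [:: 10; 3; 12; 7; 11]); (2, [:: 11; 1; 7; 10; 14]); (2, [:: 11; 2; 7; 9; 14]); (2, [:: 11; 2; 9; 7; 14]); (2, [:: 11; 2; 10; 7; 13]); (2, [:: 11; 2; 12; 7; 11]); (2, [:: 11; 3; 3; 14; 12]); (2, [:: 11; 3; 6; 11; 12]); (2, [:: 11; 3; 6; 13; 10]); (2, [:: 11; 3; 9; 14; 6]); (2, [:: 11; 3; 10; 7;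 12]); (2, [:: 11; 5; 3; 14; 10]); (2, [:: 11; 6; 3; 13; 10]); (2, [:: 14; 1; 7; 7; 14]); (2, [:: 14; 1; 10; 7; 11]); (2, [:: 14; 3; 3; 13; 10]); (4, [:: 5; 6; 7; 9; 14]); (4, [:: 5; 7; 1; 14; 14]); (4, [:: 5; 7; 6; 9; 14]); (4, [:: 5; 7; 9; 14; 6]); (4, [:: 5; 7; 10; 7; 12]); (4, [:: 7; 1; 7; 12; 14]); (4, [:: 7; 3; 5; 14; 12]); (4, [:: 7; 3; 7; 10; 14]); (4, [:: 7; 5; 3; 14; 12]); (4, [:: 7; 5; 6; 11; 12]); (4, [:: 7; 5; 9; 14; 6]); (4, [:: 7; 5; 10; 7; 12]); (4, [:: 13; 3; 5; 14; 6]); (4, [:: 13; 3; 6; 7; 12])].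
Definition cert10 : seq (nat * seq nat) := [:: (1, [:: 5; 7; 7; 13; 12]); (1, [:: 7; 7; 7; 11; 12]); (2, [:: 3; 7; 7; 14; 12]); (2, [:: 6; 7; 7; 11; 12]); (2, [:: 7; 7; 7; 10; 12]); (4, [:: 5; 7; 7; 10; 12])].
Definition cert11 : seq (nat * seq nat) := [:: (1, [:: 7; 11; 3; 12; 11]); (1, [:: 7; 11; 4; 9; 13]); (1, [:: 7; 13; 1; 9; 14]); (1, [:: 7; 13; 1; 10; 13]); (1, [:: 7; 13; 1; 12; 11]); (2, [:: 7; 10; 3; 12; 11]); (2, [:: 7; 11; 2; 9; 14]); (2, [:: 7; 11; 2; 10; 13]); (2, [:: 7; 11; 2; 12; 11]); (2, [:: 7; 14; 1; 7; 14]); (2, [:: 7; 14; 1; 10; 11]); (4, [:: 5; 14; 1; 7; 14])].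
Definition cert12 : seq (nat * seq nat) := [:: (1, [:: 5; 7; 13; 5; 14]); (1, [:: 5; 13; 7; 5; 14]); (1, [:: 7; 7; 3; 9; 18]); (1, [:: 7; 7; 7; 5; 18]); (1, [:: 7; 7; 7; 9; 14]); (1, [:: 7; 7; 11; 5; 14]); (1, [:: 7; 11; 3; 5; 18]); (1, [:: 7; 11; 7; 5; 14]); (1, [:: 7; 13; 5; 5; 14]); (1, [:: 9; 7; 5; 9; 14]); (1, [:: 9; 7; 9; 5; 14]); (1, [:: 9; 9; 7; 5; 14]); (1, [:: 9; 11; 5; 5; 14]); (1, [:: 9; 13; 3; 5; 14]); (1, [:: 11; 5; 9; 5; 14]); (1, [:: 11; 7; 3; 9; 14]); (1, [:: 11; 7; 7; 5; 14]); (1, [:: 11; 9; 5; 5; 14]); (1, [:: 11; 11; 3; 5; 14]); (1, [:: 13; 3; 9; 5; 14]); (1, [:: 13; 5; 7; 5; 14]); (1, [:: 13; 7; 5; 5; 14]); (1, [:: 13; 9; 3; 5; 14]); (2, [:: 3; 7; 13; 6; 14]); (2, [:: 3; 7; 14; 5; 14]); (2, [:: 3; 13; 7; 6; 14]); (2, [:: 3; 14; 7; 5; 14]); (2, [:: 6; 7; 7; 9; 14]); (2, [:: 6; 7; 11; 5; 14]); (2, [:: 6; 11; 7; 5; 14]); (2, [:: 7; 7; 3; 12; 14]); (2, [:: 7; 7; 6; 9; 14]); (2, [:: 7; 7; 7; 8; 14]); (2, [:: 7; 7; 10; 5; 14]); (2, [:: 7; 10; 7; 5; 14]); (2, [:: 7;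 11; 2; 9; 14]); (2, [:: 7; 11; 3; 8; 14]); (2, [:: 7; 11; 6; 5; 14]); (2, [:: 7; 14; 3; 5; 14]); (2, [:: 10; 7; 3; 9; 14]); (2, [:: 10; 7; 7; 5; 14]); (2, [:: 10; 11; 3; 5; 14]); (2, [:: 11; 3; 9; 6; 14]); (2, [:: 11; 3; 10; 5; 14]); (2, [:: 11; 5; 7; 6; 14]); (2, [:: 11; 6; 7; 5; 14]); (2, [:: 11; 7; 2; 9; 14]); (2, [:: 11; 7; 5; 6; 14]); (2, [:: 11; 7; 6; 5; 14]); (2, [:: 11; 9; 3; 6; 14]); (2, [:: 11; 10; 3; 5; 14]); (2, [:: 11; 11; 2; 5; 14]); (2, [:: 14; 3; 7; 5; 14]); (2, [:: 14; 7; 3; 5; 14]); (4, [:: 7; 3; 12; 5; 14]); (4, [:: 7; 5; 7; 8; 14]); (4, [:: 7; 5; 9; 6; 14]); (4, [:: 7; 7; 3; 10; 14]); (4, [:: 7; 7; 5; 8; 14]); (4, [:: 7; 7; 7; 6; 14]); (4, [:: 7; 9; 5; 6; 14]); (4, [:: 7; 11; 3; 6; 14]); (4, [:: 7; 13; 2; 5; 14]); (4, [:: 13; 7; 2; 5; 14])].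
Definition cert13 : seq (nat * seq nat) := [:: (1, [:: 5; 7; 7; 13; 12]); (1, [:: 5; 7; 13; 13; 6]); (1, [:: 5; 13; 7; 13; 6]); (1, [:: 7; 7; 3; 9; 18]); (1, [:: 7; 7; 5; 12; 13]); (1, [:: 7; 7; 5; 13; 12]); (1, [:: 7; 7; 7; 13; 10]); (1, [:: 7; 7; 7; 17; 6]); (1, [:: 7; 7; 11; 13; 6]); (1, [:: 7; 11; 3; 9; 14]); (1, [:: 7; 11; 3; 13; 10]); (1, [:: 7; 11; 3; 17; 6]); (1, [:: 7; 11; 5; 13; 8]); (1, [:: 7; 11; 7; 13; 6]); (1, [:: 7; 13; 3; 13; 8]); (1, [:: 7; 13; 5; 13; 6]); (1, [:: 9; 7; 3; 12; 13]); (1, [:: 9; 7; 3; 13; 12]); (1, [:: 9; 7; 5; 9; 14]); (1, [:: 9; 7; 5; 11; 12]); (1, [:: 9; 7; 5; 12; 11]); (1, [:: 9; 7; 7; 13; 8]); (1, [:: 9; 7; 9; 13; 6]); (1, [:: 9; 9; 7; 13; 6]); (1, [:: 9; 11; 5; 13; 6]); (1, [:: 9; 13; 3; 13; 6]); (1, [:: 11; 5; 7; 13; 8]); (1, [:: 11; 5; 9; 13; 6]); (1, [:: 11; 7; 1; 13; 12]); (1, [:: 11; 7; 3; 9; 14]); (1, [:: 11; 7; 3; 11; 12]); (1, [:: 11; 7; 3; 12; 11]); (1, [:: 11; 7; 4; 9; 13]); (1, [:: 11; 7; 5; 13; 8]); (1, [:: 11; 7; 7; 13; 6]); (1, [:: 11;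 9; 5; 13; 6]); (1, [:: 11; 11; 3; 13; 6]); (1, [:: 13; 3; 7; 13; 8]); (1, [:: 13; 3; 9; 13; 6]); (1, [:: 13; 5; 7; 13; 6]); (1, [:: 13; 7; 1; 10; 13]); (1, [:: 13; 7; 1; 11; 12]); (1, [:: 13; 7; 1; 12; 11]); (1, [:: 13; 7; 1; 13; 10]); (1, [:: 13; 7; 3; 13; 8]); (1, [:: 13; 7; 5; 13; 6]); (1, [:: 13; 9; 3; 13; 6]); (2, [:: 3; 7; 7; 14; 12]); (2, [:: 3; 7; 13; 14; 6]); (2, [:: 3; 7; 14; 13; 6]); (2, [:: 3; 13; 7; 14; 6]); (2, [:: 3; 14; 7; 13; 6]); (2, [:: 6; 7; 7; 13; 10]); (2, [:: 6; 7; 11; 13; 6]); (2, [:: 6; 11; 7; 13; 6]); (2, [:: 7; 7; 3; 14; 12]); (2, [:: 7; 7; 6; 9; 14]); (2, [:: 7; 7; 6; 11; 12]); (2, [:: 7; 7; 6; 12; 11]); (2, [:: 7; 7; 10; 13; 6]); (2, [:: 7; 10; 3; 9; 14]); (2, [:: 7; 10; 3; 13; 10]); (2, [:: 7; 10; 7; 13; 6]); (2, [:: 7; 11; 2; 13; 10]); (2, [:: 7; 11; 6; 13; 6]); (2, [:: 7; 14; 3; 13; 6]); (2, [:: 10; 7; 3; 9; 14]); (2, [:: 10; 7; 3; 11; 12]); (2, [:: 10; 7; 3; 12; 11]); (2, [:: 10; 7; 7; 13; 6]); (2, [:: 10; 11; 3; 13; 6]); (2, [:: 11; 3; 7; 14;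 8]); (2, [:: 11; 3; 9; 14; 6]); (2, [:: 11; 3; 10; 13; 6]); (2, [:: 11; 5; 7; 14; 6]); (2, [:: 11; 6; 7; 13; 6]); (2, [:: 11; 7; 1; 10; 14]); (2, [:: 11; 7; 1; 14; 10]); (2, [:: 11; 7; 2; 10; 13]); (2, [:: 11; 7; 2; 11; 12]); (2, [:: 11; 7; 2; 12; 11]); (2, [:: 11; 7; 3; 14; 8]); (2, [:: 11; 7; 5; 14; 6]); (2, [:: 11; 7; 6; 13; 6]); (2, [:: 11; 9; 3; 14; 6]); (2, [:: 11; 10; 3; 13; 6]); (2, [:: 11; 11; 2; 13; 6]); (2, [:: 14; 3; 7; 13; 6]); (2, [:: 14; 7; 1; 10; 11]); (2, [:: 14; 7; 1; 11; 10]); (2, [:: 14; 7; 3; 13; 6]); (4, [:: 7; 3; 12; 13; 6]); (4, [:: 7; 5; 7; 14; 8]); (4, [:: 7; 5; 9; 14; 6]); (4, [:: 7; 7; 1; 12; 14]); (4, [:: 7; 7; 3; 10; 14]); (4, [:: 7; 7; 5; 14; 8]); (4, [:: 7; 7; 7; 14; 6]); (4, [:: 7; 9; 5; 14; 6]); (4, [:: 7; 11; 3; 14; 6]); (4, [:: 7; 13; 2; 13; 6]); (4, [:: 13; 7; 2; 13; 6])].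
Definition cert14 : seq (nat * seq nat) := [:: (1, [:: 7; 11; 13; 5; 8]); (1, [:: 7; 13; 11; 5; 8]); (1, [:: 7; 13; 13; 5; 6]); (1, [:: 11; 7; 13; 1; 12]); (1, [:: 13; 7; 11; 1; 12]); (1, [:: 13; 7; 13; 1; 10]); (2, [:: 7; 11; 11; 4; 10]); (2, [:: 7; 11; 11; 6; 8]); (2, [:: 7; 11; 11; 8; 6]); (2, [:: 7; 11; 13; 6; 6]); (2, [:: 7; 11; 14; 5; 6]); (2, [:: 7; 14; 11; 5; 6]); (2, [:: 11; 7; 11; 2; 12]); (2, [:: 11; 7; 11; 4; 10]); (2, [:: 11; 7; 11; 8; 6]); (2, [:: 11; 7; 13; 2; 10]); (2, [:: 11; 7; 14; 1; 10]); (2, [:: 11; 11; 11; 4; 6]); (2, [:: 14; 7; 11; 1; 10]); (4, [:: 5; 11; 13; 6; 6]); (4, [:: 5; 11; 14; 5; 6]); (4, [:: 5; 14; 11; 5; 6]); (4, [:: 7; 7; 13; 2; 12]); (4, [:: 7; 7; 13; 8; 6]); (4, [:: 7; 11; 13; 4; 6]); (4, [:: 7; 13; 11; 4; 6]); (4, [:: 13; 7; 11; 4; 6])].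
Definition cert15 : seq (nat * seq nat) := [:: (1, [:: 3; 3; 13; 14; 11]); (1, [:: 3; 3; 13; 18; 7]); (1, [:: 3; 3; 17; 14; 7]); (1, [:: 3; 5; 13; 11; 12]); (1, [:: 3; 5; 13; 13; 10]); (1, [:: 5; 3; 13; 11; 12]); (1, [:: 5; 3; 13; 14; 9]); (1, [:: 5; 3; 14; 13; 9]); (1, [:: 5; 5; 13; 11; 10]); (2, [:: 2; 3; 13; 14; 11]); (2, [:: 3; 3; 14; 11; 12]); (2, [:: 3; 5; 13; 13; 9]); (2, [:: 3; 5; 13; 17; 5]); (2, [:: 3; 5; 14; 11; 10]); (2, [:: 3; 5; 14; 14; 7]); (2, [:: 3; 5; 17; 13; 5]); (2, [:: 3; 6; 13; 11; 10]); (2, [:: 6; 3; 13; 11; 10]); (4, [:: 3; 3; 13; 13; 9]); (4, [:: 3; 3; 13; 17; 5]); (4, [:: 3; 3; 14; 14; 7]); (4, [:: 3; 3; 17; 13; 5])].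
Definition cert16 : seq (nat * seq nat) := [:: (1, [:: 3; 13; 5; 10; 13]); (1, [:: 3; 13; 5; 12; 11]); (1, [:: 5; 5; 9; 11; 14]); (1, [:: 5; 5; 9; 14; 11]); (1, [:: 5; 5; 10; 11; 13]); (1, [:: 5; 5; 10; 13; 11]); (1, [:: 5; 6; 9; 11; 13]); (1, [:: 5; 6; 9; 13; 11]); (1, [:: 5; 7; 3; 11; 18]); (1, [:: 5; 7; 3; 18; 11]); (1, [:: 5; 7; 5; 13; 14]); (1, [:: 5; 7; 5; 14; 13]); (1, [:: 5; 7; 6; 13; 13]); (1, [:: 5; 7; 9; 11; 12]); (1, [:: 5; 7; 9; 12; 11]); (1, [:: 5; 7; 10; 11; 11]); (1, [:: 5; 11; 3; 11; 14]); (1, [:: 5; 11; 3; 12; 13]); (1, [:: 5; 11; 3; 13; 12]); (1, [:: 5; 11; 3; 14; 11]); (1, [:: 5; 11; 4; 11; 13]); (1, [:: 5; 11; 4; 13; 11]); (1, [:: 5; 11; 5; 10; 13]); (1, [:: 5; 11; 5; 11; 12]); (1, [:: 5; 11; 6; 11; 11]); (1, [:: 5; 12; 3; 11; 13]); (1, [:: 5; 12; 3; 13; 11]); (1, [:: 5; 12; 5; 11; 11]); (1, [:: 5; 13; 5; 10; 11]); (2, [:: 3; 5; 10; 11; 14]); (2, [:: 3; 5; 10; 14; 11]); (2, [:: 3; 6; 9; 11; 14]); (2, [:: 3; 6; 9; 14; 11]); (2, [:: 3; 6; 10; 11; 13]); (2, [:: 3; 6; 10; 13; 11]); (2, [:: 3;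 7; 3; 13; 17]); (2, [:: 3; 7; 3; 17; 13]); (2, [:: 3; 7; 5; 11; 17]); (2, [:: 3; 7; 5; 14; 14]); (2, [:: 3; 7; 5; 17; 11]); (2, [:: 3; 7; 6; 13; 14]); (2, [:: 3; 7; 6; 14; 13]); (2, [:: 3; 7; 9; 11; 13]); (2, [:: 3; 7; 9; 13; 11]); (2, [:: 3; 7; 10; 11; 12]); (2, [:: 3; 7; 10; 12; 11]); (2, [:: 3; 9; 3; 11; 17]); (2, [:: 3; 9; 3; 17; 11]); (2, [:: 3; 9; 5; 13; 13]); (2, [:: 3; 9; 9; 11; 11]); (2, [:: 3; 11; 3; 12; 14]); (2, [:: 3; 11; 3; 14; 12]); (2, [:: 3; 11; 4; 11; 14]); (2, [:: 3; 11; 4; 14; 11]); (2, [:: 3; 11; 5; 10; 14]); (2, [:: 3; 11; 6; 10; 13]); (2, [:: 3; 11; 6; 11; 12]); (2, [:: 3; 12; 3; 11; 14]); (2, [:: 3; 12; 3; 14; 11]); (2, [:: 3; 12; 6; 11; 11]); (2, [:: 3; 13; 3; 11; 13]); (2, [:: 3; 13; 3; 13; 11]); (2, [:: 3; 13; 5; 11; 11]); (2, [:: 3; 13; 6; 10; 11]); (2, [:: 3; 14; 5; 10; 11]); (2, [:: 6; 11; 5; 10; 11]); (4, [:: 3; 5; 3; 13; 17]); (4, [:: 3; 5; 3; 17; 13]); (4, [:: 3; 5; 5; 11; 17]); (4, [:: 3; 5; 5; 17; 11]); (4, [:: 3; 5; 9; 11; 13]); (4, [:: 3; 5; 9; 13;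 11]); (4, [:: 3; 7; 3; 11; 17]); (4, [:: 3; 7; 3; 17; 11]); (4, [:: 3; 7; 5; 13; 13]); (4, [:: 3; 7; 9; 11; 11]); (4, [:: 3; 11; 3; 11; 13]); (4, [:: 3; 11; 3; 13; 11]); (4, [:: 3; 11; 5; 11; 11])].
Definition cert17 : seq (nat * seq nat) := [:: (1, [:: 3; 11; 5; 7; 18]); (1, [:: 3; 11; 5; 11; 14]); (1, [:: 3; 11; 9; 7; 14]); (1, [:: 5; 3; 7; 11; 18]); (1, [:: 5; 3; 7; 18; 11]); (1, [:: 5; 3; 11; 7; 18]); (1, [:: 5; 3; 11; 13; 12]); (1, [:: 5; 3; 11; 14; 11]); (1, [:: 5; 3; 12; 13; 11]); (1, [:: 5; 3; 13; 9; 14]); (1, [:: 5; 3; 13; 10; 13]); (1, [:: 5; 3; 13; 11; 12]); (1, [:: 5; 3; 13; 12; 11]); (1, [:: 5; 3; 14; 9; 13]); (1, [:: 5; 3; 14; 11; 11]); (1, [:: 5; 3; 18; 7; 11]); (1, [:: 5; 4; 11; 13; 11]); (1, [:: 5; 4; 13; 11; 11]); (1, [:: 5; 5; 7; 13; 14]); (1, [:: 5; 5; 7; 14; 13]); (1, [:: 5; 5; 9; 14; 11]); (1, [:: 5; 5; 10; 13; 11]); (1, [:: 5; 5; 13; 7; 14]); (1, [:: 5; 5; 13; 10; 11]); (1, [:: 5; 5; 14; 7; 13]); (1, [:: 5; 5; 14; 9; 11]); (1, [:: 5; 6; 7; 13; 13]); (1, [:: 5; 6; 9; 13; 11]); (1,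 [:: 5; 6; 13; 7; 13]); (1, [:: 5; 6; 13; 9; 11]); (1, [:: 5; 7; 7; 7; 18]); (1, [:: 5; 7; 7; 11; 14]); (1, [:: 5; 7; 7; 12; 13]); (1, [:: 5; 7; 8; 11; 13]); (1, [:: 5; 7; 9; 9; 14]); (1, [:: 5; 7; 9; 10; 13]); (1, [:: 5; 7; 9; 11; 12]); (1, [:: 5; 7; 9; 12; 11]); (1, [:: 5; 7; 10; 9; 13]); (1, [:: 5; 7; 10; 11; 11]); (1, [:: 5; 7; 11; 7; 14]); (1, [:: 5; 7; 11; 8; 13]); (1, [:: 5; 7; 11; 9; 12]); (1, [:: 5; 7; 11; 10; 11]); (1, [:: 5; 7; 12; 7; 13]); (1, [:: 5; 7; 12; 9; 11]); (1, [:: 5; 8; 7; 11; 13]); (1, [:: 5; 8; 11; 7; 13]); (1, [:: 5; 11; 7; 7; 14]); (1, [:: 5; 11; 7; 8; 13]); (1, [:: 5; 11; 7; 9; 12]); (1, [:: 5; 11; 7; 10; 11]); (1, [:: 5; 11; 8; 7; 13]); (1, [:: 5; 11; 9; 7; 12]); (1, [:: 5; 11; 10; 7; 11]); (1, [:: 5; 12; 7; 7; 13]); (1, [:: 5; 12; 7; 9; 11]); (1, [:: 5; 12; 9; 7; 11]); (2, [:: 2; 11; 5; 11; 14]); (2, [:: 2; 11; 9; 7; 14]); (2, [:: 3; 3; 7; 13; 17]); (2, [:: 3; 3; 7; 17; 13]); (2, [:: 3; 3; 9; 11; 17]); (2, [:: 3; 3; 9; 17; 11]); (2, [:: 3; 3;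 11; 9; 17]); (2, [:: 3; 3; 11; 13; 13]); (2, [:: 3; 3; 11; 14; 12]); (2, [:: 3; 3; 12; 14; 11]); (2, [:: 3; 3; 13; 7; 17]); (2, [:: 3; 3; 13; 10; 14]); (2, [:: 3; 3; 13; 11; 13]); (2, [:: 3; 3; 14; 9; 14]); (2, [:: 3; 3; 14; 10; 13]); (2, [:: 3; 3; 14; 11; 12]); (2, [:: 3; 3; 14; 12; 11]); (2, [:: 3; 3; 17; 7; 13]); (2, [:: 3; 3; 17; 9; 11]); (2, [:: 3; 4; 11; 14; 11]); (2, [:: 3; 4; 14; 11; 11]); (2, [:: 3; 5; 5; 13; 17]); (2, [:: 3; 5; 5; 17; 13]); (2, [:: 3; 5; 7; 11; 17]); (2, [:: 3; 5; 7; 14; 14]); (2, [:: 3; 5; 7; 17; 11]); (2, [:: 3; 5; 10; 14; 11]); (2, [:: 3; 5; 11; 7; 17]); (2, [:: 3; 5; 11; 13; 11]); (2, [:: 3; 5; 13; 9; 13]); (2, [:: 3; 5; 13; 11; 11]); (2, [:: 3; 5; 14; 7; 14]); (2, [:: 3; 5; 14; 10; 11]); (2, [:: 3; 5; 17; 7; 11]); (2, [:: 3; 6; 7; 13; 14]); (2, [:: 3; 6; 7; 14; 13]); (2, [:: 3; 6; 9; 14; 11]); (2, [:: 3; 6; 10; 13; 11]); (2, [:: 3; 6; 13; 7; 14]); (2, [:: 3; 6; 13; 10; 11]); (2, [:: 3; 6; 14; 7; 13]); (2, [:: 3; 6; 14; 9; 11]); (2, [:: 3; 7; 7; 9; 17]);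 (2, [:: 3; 7; 7; 12; 14]); (2, [:: 3; 7; 7; 13; 13]); (2, [:: 3; 7; 8; 11; 14]); (2, [:: 3; 7; 9; 7; 17]); (2, [:: 3; 7; 9; 10; 14]); (2, [:: 3; 7; 9; 13; 11]); (2, [:: 3; 7; 10; 9; 14]); (2, [:: 3; 7; 10; 10; 13]); (2, [:: 3; 7; 10; 11; 12]); (2, [:: 3; 7; 10; 12; 11]); (2, [:: 3; 7; 11; 8; 14]); (2, [:: 3; 7; 11; 10; 12]); (2, [:: 3; 7; 12; 7; 14]); (2, [:: 3; 7; 12; 10; 11]); (2, [:: 3; 7; 13; 7; 13]); (2, [:: 3; 7; 13; 9; 11]); (2, [:: 3; 8; 7; 11; 14]); (2, [:: 3; 8; 11; 7; 14]); (2, [:: 3; 9; 7; 7; 17]); (2, [:: 3; 9; 7; 11; 13]); (2, [:: 3; 9; 9; 9; 13]); (2, [:: 3; 9; 9; 11; 11]); (2, [:: 3; 9; 11; 7; 13]); (2, [:: 3; 9; 11; 9; 11]); (2, [:: 3; 11; 6; 9; 14]); (2, [:: 3; 11; 7; 8; 14]); (2, [:: 3; 11; 7; 10; 12]); (2, [:: 3; 11; 10; 7; 12]); (2, [:: 3; 12; 7; 7; 14]); (2, [:: 3; 12; 7; 10; 11]); (2, [:: 3; 12; 10; 7; 11]); (2, [:: 3; 13; 6; 7; 14]); (2, [:: 3; 13; 7; 7; 13]); (2, [:: 3; 13; 7; 9; 11]); (2, [:: 3; 13; 9; 7; 11]); (4, [:: 3; 3; 5; 13; 17]); (4, [:: 3;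 3; 5; 17; 13]); (4, [:: 3; 3; 7; 11; 17]); (4, [:: 3; 3; 7; 17; 11]); (4, [:: 3; 3; 11; 7; 17]); (4, [:: 3; 3; 11; 13; 11]); (4, [:: 3; 3; 13; 9; 13]); (4, [:: 3; 3; 13; 11; 11]); (4, [:: 3; 3; 17; 7; 11]); (4, [:: 3; 5; 7; 9; 17]); (4, [:: 3; 5; 7; 13; 13]); (4, [:: 3; 5; 9; 7; 17]); (4, [:: 3; 5; 9; 13; 11]); (4, [:: 3; 5; 13; 7; 13]); (4, [:: 3; 5; 13; 9; 11]); (4, [:: 3; 7; 7; 7; 17]); (4, [:: 3; 7; 7; 11; 13]); (4, [:: 3; 7; 9; 9; 13]); (4, [:: 3; 7; 9; 11; 11]); (4, [:: 3; 7; 11; 7; 13]); (4, [:: 3; 7; 11; 9; 11]); (4, [:: 3; 11; 6; 7; 14]); (4, [:: 3; 11; 7; 7; 13]); (4, [:: 3; 11; 7; 9; 11]); (4, [:: 3; 11; 9; 7; 11]); (4, [:: 3; 13; 6; 7; 12])].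
Definition cert18 : seq (nat * seq nat) := [:: (1, [:: 3; 13; 13; 2; 13]); (1, [:: 3; 13; 13; 4; 11]); (1, [:: 5; 5; 11; 9; 14]); (1, [:: 5; 5; 11; 10; 13]); (1, [:: 5; 5; 13; 10; 11]); (1, [:: 5; 5; 14; 9; 11]); (1, [:: 5; 6; 11; 9; 13]); (1, [:: 5; 6; 13; 9; 11]); (1, [:: 5; 7; 11; 3; 18]); (1, [:: 5; 7; 11; 9; 12]); (1, [:: 5; 7; 11; 10; 11]); (1, [:: 5; 7; 12; 9; 11]); (1, [:: 5; 7; 13; 5; 14]); (1, [:: 5; 7; 13; 6; 13]); (1, [:: 5; 7; 14; 5; 13]); (1, [:: 5; 7; 18; 3; 11]); (1, [:: 5; 11; 11; 3; 14]); (1, [:: 5; 11; 11; 4; 13]); (1, [:: 5; 11; 11; 5; 12]); (1, [:: 5; 11; 11; 6; 11]); (1, [:: 5; 11; 12; 3; 13]); (1, [:: 5; 11; 12; 5; 11]); (1, [:: 5; 11; 13; 2; 13]); (1, [:: 5; 11; 13; 3; 12]); (1, [:: 5; 11; 14; 3; 11]); (1, [:: 5; 12; 11; 3; 13]); (1, [:: 5; 12; 11; 5; 11]); (1, [:: 5; 12; 13; 3; 11]); (1, [:: 5; 13; 13; 2; 11]); (2, [:: 3; 5; 11; 10; 14]); (2, [:: 3; 5; 14; 10; 11]); (2, [:: 3; 6; 11; 9; 14]); (2, [:: 3; 6; 11; 10; 13]); (2, [:: 3; 6; 13; 10; 11]); (2, [:: 3; 6; 14; 9; 11]); (2, [:: 3;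 7; 11; 5; 17]); (2, [:: 3; 7; 11; 9; 13]); (2, [:: 3; 7; 11; 10; 12]); (2, [:: 3; 7; 12; 10; 11]); (2, [:: 3; 7; 13; 3; 17]); (2, [:: 3; 7; 13; 6; 14]); (2, [:: 3; 7; 13; 9; 11]); (2, [:: 3; 7; 14; 5; 14]); (2, [:: 3; 7; 14; 6; 13]); (2, [:: 3; 7; 17; 3; 13]); (2, [:: 3; 7; 17; 5; 11]); (2, [:: 3; 9; 11; 3; 17]); (2, [:: 3; 9; 11; 9; 11]); (2, [:: 3; 9; 13; 5; 13]); (2, [:: 3; 9; 17; 3; 11]); (2, [:: 3; 11; 11; 4; 14]); (2, [:: 3; 11; 11; 6; 12]); (2, [:: 3; 11; 12; 3; 14]); (2, [:: 3; 11; 12; 6; 11]); (2, [:: 3; 11; 13; 2; 14]); (2, [:: 3; 11; 14; 2; 13]); (2, [:: 3; 11; 14; 3; 12]); (2, [:: 3; 12; 11; 3; 14]); (2, [:: 3; 12; 11; 6; 11]); (2, [:: 3; 12; 14; 3; 11]); (2, [:: 3; 13; 11; 3; 13]); (2, [:: 3; 13; 11; 5; 11]); (2, [:: 3; 13; 13; 3; 11]); (2, [:: 3; 13; 14; 2; 11]); (2, [:: 3; 14; 13; 2; 11]); (2, [:: 6; 11; 13; 2; 11]); (4, [:: 3; 5; 11; 5; 17]); (4, [:: 3; 5; 11; 9; 13]); (4, [:: 3; 5; 13; 3; 17]); (4, [:: 3; 5; 13; 9; 11]); (4, [:: 3; 5; 17; 3; 13]); (4, [:: 3; 5; 17; 5;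 11]); (4, [:: 3; 7; 11; 3; 17]); (4, [:: 3; 7; 11; 9; 11]); (4, [:: 3; 7; 13; 5; 13]); (4, [:: 3; 7; 17; 3; 11]); (4, [:: 3; 11; 11; 3; 13]); (4, [:: 3; 11; 11; 5; 11]); (4, [:: 3; 11; 13; 3; 11])].

Lemma list_forall (T : eqType) (P : T -> Prop) (s : seq T) :
  foldr (fun a acc => P a /\ acc) True s -> forall x, x \in s -> P x.
Proof.
elim: s => [|a s IH] //= [Ha Hs] x; rewrite inE => /orP [/eqP -> //|].
exact: IH.
Qed.

Lemma h0 : strictly_inadmissible (toM [:: 3; 5; 9; 14; 14]).
Proof. apply: (strict_of_check (cert := cert0)). vm_compute. reflexivity. Qed.

Lemma h1 : strictly_inadmissible (toM [:: 3; 5; 14; 9; 14]).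
Proof. apply: (strict_of_check (cert := cert1)). vm_compute. reflexivity. Qed.

Lemma h2 : strictly_inadmissible (toM [:: 3; 7; 11; 12; 12]).
Proof. apply: (strict_of_check (cert := cert2)). vm_compute. reflexivity. Qed.

Lemma h3 : strictly_inadmissible (toM [:: 3; 7; 13; 8; 14]).
Proof. apply: (strict_of_check (cert := cert3)). vm_compute. reflexivity. Qed.

Lemma h4 : strictly_inadmissible (toM [:: 3; 7; 13; 14; 8]).
Proof. apply: (strict_of_check (cert := cert4)). vm_compute. reflexivity. Qed.

Lemma h5 : strictly_inadmissible (toM [:: 3; 12; 3; 13; 14]).
Proof. apply: (strict_of_check (cert := cert5)). vm_compute. reflexivity. Qed.

Lemma h6 : strictly_inadmissible (toM [:: 7; 3; 11; 12; 12]).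
Proof. apply: (strict_of_check (cert := cert6)). vm_compute. reflexivity. Qed.

Lemma h7 : strictly_inadmissible (toM [:: 7; 3; 13; 8; 14]).
Proof. apply: (strict_of_check (cert := cert7)). vm_compute. reflexivity. Qed.

Lemma h8 : strictly_inadmissible (toM [:: 7; 3; 13; 14; 8]).
Proof. apply: (strict_of_check (cert := cert8)). vm_compute. reflexivity. Qed.

Lemma h9 : strictly_inadmissible (toM [:: 7; 7; 9; 14; 8]).
Proof. apply: (strict_of_check (cert := cert9)). vm_compute. reflexivity. Qed.

Lemma h10 : strictly_inadmissible (toM [:: 7; 9; 7; 10; 12]).
Proof. apply: (strict_of_check (cert := cert10)). vm_compute. reflexivity. Qed.

Lemma h11 : strictly_inadmissible (toM [:: 7; 11; 3; 12; 12]).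
Proof. apply: (strict_of_check (cert := cert11)). vm_compute. reflexivity. Qed.

Lemma h12 : strictly_inadmissible (toM [:: 7; 11; 5; 8; 14]).
Proof. apply: (strict_of_check (cert := cert12)). vm_compute. reflexivity. Qed.

Lemma h13 : strictly_inadmissible (toM [:: 7; 11; 5; 14; 8]).
Proof. apply: (strict_of_check (cert := cert13)). vm_compute. reflexivity. Qed.

Lemma h14 : strictly_inadmissible (toM [:: 7; 11; 13; 6; 8]).
Proof. apply: (strict_of_check (cert := cert14)). vm_compute. reflexivity. Qed.

Lemma h15 : strongly_inadmissible (toM [:: 3; 5; 14; 11; 12]).
Proof. apply: (strong_of_check (cert := cert15)). vm_compute. reflexivity. Qed.

Lemma h16 : strongly_inadmissible (toM [:: 3; 13; 6; 11; 12]).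
Proof. apply: (strong_of_check (cert := cert16)). vm_compute. reflexivity. Qed.

Lemma h17 : strongly_inadmissible (toM [:: 3; 13; 7; 10; 12]).
Proof. apply: (strong_of_check (cert := cert17)). vm_compute. reflexivity. Qed.

Lemma h18 : strongly_inadmissible (toM [:: 3; 13; 14; 3; 12]).
Proof. apply: (strong_of_check (cert := cert18)). vm_compute. reflexivity. Qed.

Theorem lemma4 :
  (forall x, x \in [:: mono5 3 5 9 14 14; mono5 3 5 14 9 14; mono5 3 7 11 12 12;
                      mono5 3 7 13 8 14; mono5 3 7 13 14 8; mono5 3 12 3 13 14;
                      mono5 7 3 11 12 12; mono5 7 3 13 8 14; mono5 7 3 13 14 8;
                      mono5 7 7 9 14 8; mono5 7 9 7 10 12; mono5 7 11 3 12 12;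
                      mono5 7 11 5 8 14; mono5 7 11 5 14 8; mono5 7 11 13 6 8] ->
     strictly_inadmissible x) /\
  (forall x, x \in [:: mono5 3 5 14 11 12; mono5 3 13 6 11 12;
                      mono5 3 13 7 10 12; mono5 3 13 14 3 12] ->
     strongly_inadmissible x).
Proof.
split; apply: list_forall.
- exact: (conj h0 (conj h1 (conj h2 (conj h3 (conj h4 (conj h5 (conj h6 (conj h7 (conj h8 (conj h9 (conj h10 (conj h11 (conj h12 (conj h13 (conj h14 I))))))))))))))).
- exact: (conj h15 (conj h16 (conj h17 (conj h18 I)))).
Qed.
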